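(* Let $\mathbb P$ be the law of a stationary simple point process on $\mathbb R^d$ with finite positive intensity $m$. For every $\gamma>0$, $L\in\mathbb N$ and $z\in\mathbb R^d$, $$\mathbb E_0\big[\xi(\Lambda_L(z))^\gamma\big]\le\frac1m(2L+2)^{d\gamma}\rho_{1+\gamma}.$$
   Context: $\mathcal N$ = locally finite subsets of $\mathbb R^d$, identified with counting measures ($\xi(A)=\#(\xi\cap A)$); $\tau_x\xi=\xi-x$; stationarity: $\mathbb P(\tau_xA)=\mathbb P(A)$. Intensity $m=\mathbb E[\xi([0,1]^d)]$. $\Lambda_L(z)=z+[-L,L]^d$. $\rho_\gamma:=\mathbb E[\xi([0,1]^d)^\gamma]$ (possibly $+\infty$). The Palm distribution is $\mathbb P_0(A)=\frac1m\int d\mathbb P(\xi)\sum_{x\in\xi\cap[0,1]^d}\mathbf 1_A(\tau_x\xi)$, with expectation $\mathbb E_0$. $\mathbb N=\{0,1,2,\dots\}$. *)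

(* Defs.v *)
From HB Require Import structures.
From mathcomp Require Import all_boot all_order all_algebra.
From mathcomp Require Import all_classical all_reals all_analysis.
Set Implicit Arguments. Unset Strict Implicit. Unset Printing Implicit Defensive.
Import Order.TTheory GRing.Theory Num.Theory.
Local Open Scope classical_set_scope.
Local Open Scope ring_scope.

(* Points of R^d are d-tuples of reals; d.-tuple R carries the product
   (= Borel) sigma-algebra of mathcomp-analysis. *)
Definition pt (R : realType) (d : nat) := (d.-tuple R)%type.

Definition addp (R : realType) (d : nat) (x y : pt R d) : pt R d :=
  [tuple tnth x i + tnth y i | i < d].
Definition subp (R : realType) (d : nat) (x y : pt R d) : pt R d :=
  [tuple tnth x i - tnth y i | i < d].

Definition boundedp (R : realType) (d : nat) (B : set (pt R d)) : Prop :=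
  exists r : R, forall x, B x -> forall i, `|tnth x i| <= r.

Definition locfin (R : realType) (d : nat) (S : set (pt R d)) : Prop :=
  forall B, boundedp B -> finite_set (S `&` B).

Record config (R : realType) (d : nat) := Config {
  cpts : set (pt R d) ;
  cpts_lf : locfin cpts }.

Lemma locfin0 (R : realType) (d : nat) : locfin (@set0 (pt R d)).
Proof. by move=> B _; rewrite set0I; exact: finite_set0. Qed.

HB.instance Definition _ (R : realType) (d : nat) := gen_eqMixin (config R d).
HB.instance Definition _ (R : realType) (d : nat) := gen_choiceMixin (config R d).
HB.instance Definition _ (R : realType) (d : nat) :=
  isPointed.Build (config R d) (Config (@locfin0 R d)).

Definition npts (R : realType) (d : nat) (xi : config R d) (A : set (pt R d))
  : \bar R := (\esum_(x in cpts xi `&` A) 1)%E.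

Lemma locfin_shift (R : realType) (d : nat) (S : set (pt R d)) (x : pt R d) :
  locfin S -> locfin [set subp y x | y in S].
Proof.
move=> hS B [r hr].
pose B' := [set y | B (subp y x)].
have bB' : boundedp B'.
  exists (r + \sum_(j < d) `|tnth x j|) => y /hr Hy i.
  have := Hy i; rewrite /subp tnth_mktuple => h.
  have -> : tnth y i = (tnth y i - tnth x i) + tnth x i by rewrite subrK.
  apply: (le_trans (ler_normD _ _)); apply: lerD => //.
  rewrite (bigD1 i) //= lerDl; exact: sumr_ge0.
apply: (@sub_finite_set _ _ ((fun y => subp y x) @` (S `&` B'))).
  by move=> _ [[y Sy <-] By]; exists y.
exact/finite_image/hS.
Qed.

Definition shift (R : realType) (d : nat) (x : pt R d) (xi : config R d)
  : config R d := Config (locfin_shift x (cpts_lf xi)).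

(* the sigma-algebra on N generated by the counting maps xi |-> xi(B),
   B bounded Borel *)
Definition count_events (R : realType) (d : nat) : set (set (config R d)) :=
  [set E | exists (B : set (pt R d)) (n : nat),
     [/\ measurable B, boundedp B & E = [set xi | npts xi B = n%:R%:E]]].

Definition configT (R : realType) (d : nat) :=
  g_sigma_algebraType (@count_events R d).

Definition cube01 (R : realType) (d : nat) : set (pt R d) :=
  [set y | forall i, 0 <= tnth y i <= 1].
Definition Lambda (R : realType) (d : nat) (L : nat) (z : pt R d) : set (pt R d) :=
  [set y | forall i, tnth z i - L%:R <= tnth y i <= tnth z i + L%:R].

Definition stationary (R : realType) (d : nat) (P : probability (configT R d) R) :=
  forall (x : pt R d) (A : set (configT R d)), measurable A ->
    P ((shift x) @` A) = P A.

Definition rho (R : realType) (d : nat) (P : probability (configT R d) R) (g : R)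
  : \bar R := (\int[P]_xi (npts xi (@cube01 R d) `^ g))%E.

(* Palm expectation of a nonnegative functional f, i.e. the integral of f
   against P_0(A) = 1/m \int dP(xi) sum_{x in xi \cap [0,1]^d} 1_A(tau_x xi) *)
Definition palmE (R : realType) (d : nat) (P : probability (configT R d) R) (m : R)
  (f : config R d -> \bar R) : \bar R :=
  ((m^-1)%:E * \int[P]_xi (\esum_(x in cpts xi `&` @cube01 R d) f (shift x xi)))%E.

(* Main.v *)
Require Import Defs.
From HB Require Import structures.
From mathcomp Require Import all_boot all_order all_algebra.
From mathcomp Require Import all_classical all_reals all_analysis.
From mathcomp Require Import measurable_realfun.
From mathcomp Require Import lra ring finmap.
Import Order.TTheory GRing.Theory Num.Theory.
Local Open Scope classical_set_scope.
Local Open Scope ring_scope.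

Section Real.
Context (R : realType).

Lemma young (a b g : R) : 0 <= a -> 0 <= b -> 0 < g ->
  a * b `^ g <= a `^ (1+g) / (1+g) + b `^ (1+g) * (g / (1+g)).
Proof.
move=> a0 b0 g0.
have p0 : 0 < 1 + g by lra.
have q0 : 0 < (1+g)/g by rewrite divr_gt0.
have pq : (1+g)^-1 + ((1+g)/g)^-1 = 1.
  rewrite invf_div; field.
  by rewrite (gt_eqF p0).
have := conjugate_powR a0 (powR_ge0 b g) p0 q0 pq.
rewrite -powRrM (_ : g * ((1+g)/g) = 1+g); last by rewrite mulrC divfK // gt_eqF.
by rewrite invf_div.
Qed.

Lemma key_ineq (K : finType) (a g : R) (s : K -> R) :
  0 <= a -> (forall k, 0 <= s k) -> 0 < g -> (0 < #|K|)%N ->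
  a * (\sum_k s k) `^ g <= (#|K|%:R `^ g / (1+g)) * a `^ (1+g)
     + (#|K|%:R `^ g / #|K|%:R * (g/(1+g))) * \sum_k s k `^ (1+g).
Proof.
move=> a0 s0 g0 K0.
have p0 : 0 < 1 + g by lra.
set N : R := #|K|%:R.
have N0 : 0 < N by rewrite /N ltr0n.
set M := \sum_k s k.
have M0 : 0 <= M by apply: sumr_ge0.
set c := M / N.
have c0 : 0 <= c by rewrite divr_ge0 // ltW.
have hM : M = N * c by rewrite /c mulrC divfK // gt_eqF.
have cp : c * c `^ g = c `^ (1+g).
  have e : 1 + g - 1 = g by lra.
  by have := mulr_powRB1 c0 p0; rewrite e.
set S := \sum_k s k `^ (1+g).
have S0 : 0 <= S by apply: sumr_ge0 => k _; exact: powR_ge0.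
have jensen : N * c `^ (1+g) <= S.
  have h : \sum_k s k * c `^ g <= \sum_k (s k `^ (1+g) / (1+g) + c `^ (1+g) * (g / (1+g))).
    by apply: ler_sum => k _; apply: young.
  rewrite -mulr_suml -/M big_split /= -mulr_suml -/S sumr_const -mulr_natr in h.

  move: h; rewrite hM -mulrA cp -/N.
  set X := N * c `^ (1+g) => h.
  have hX : X * (1 + g) <= S + X * g.
    have := ler_wpM2r (ltW p0) h.
    have -> : (S / (1 + g) + c `^ (1 + g) * (g / (1 + g)) * N) * (1 + g) = S + X * g.
      rewrite /X; field; by rewrite (gt_eqF p0).
    by [].
  nra.
have Ng : N `^ g * c `^ g = M `^ g by rewrite hM powRM // ltW.
rewrite -Ng mulrCA.
apply: le_trans; first exact: (ler_wpM2l (powR_ge0 N g) (young _ _ _ a0 c0 g0)).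
have cS : c `^ (1+g) <= S / N by rewrite ler_pdivlMr // mulrC.
apply: le_trans; first apply: (ler_wpM2l (powR_ge0 N g) (lerD (lexx _) (ler_wpM2r _ cS))).
  by rewrite divr_ge0 // ltW.
rewrite le_eqVlt; apply/orP; left; apply/eqP; field.
by rewrite (gt_eqF p0) (gt_eqF N0).
Qed.

End Real.

Section Counts.
Context (R : realType) (d : nat).
Local Notation pt := (pt R d).
Local Notation config := (config R d).

Definition cnt (xi : config) (A : set pt) : nat := (#|` fset_set (cpts xi `&` A)|)%fset.

Lemma npts_cnt xi A : boundedp A -> npts xi A = (cnt xi A)%:R%:E.
Proof.
move=> bA; have finA : finite_set (cpts xi `&` A) := cpts_lf xi bA.
by rewrite /npts /cnt finite_card_sum.
Qed.

Lemma npts_ge0 (xi : config) (A : set pt) : (0 <= npts xi A)%E.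
Proof. by apply: esum_ge0. Qed.

Lemma npts_le (xi : config) (A B : set pt) : A `<=` B -> (npts xi A <= npts xi B)%E.
Proof.
move=> AB; rewrite /npts !esum_mkcondr; apply: le_esum => i _.
case: ifPn => [/set_mem/AB/mem_set ->//|_]; by case: ifP.
Qed.

Lemma npts_sub_sum (K : finType) (Q : K -> set pt) (xi : config) (A : set pt) :
  A `<=` \bigcup_k Q k -> (npts xi A <= \sum_k npts xi (Q k))%E.
Proof.
move=> AQ; rewrite /npts esum_mkcondr.
under eq_bigr do rewrite esum_mkcondr.
rewrite -esum_sum; last by move=> i j _ _; case: ifP.
apply: le_esum => i _; case: ifPn => [/set_mem/AQ [k _ Qk]|_]; last first.
  by apply: sume_ge0 => j _; case: ifP.
rewrite (bigD1 k) //= ifT; last exact/mem_set.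
by apply: leeDl; apply: sume_ge0 => j _; case: ifP.
Qed.

Definition negp (x : pt) : pt := [tuple - tnth x i | i < d].

Lemma config_eq (x y : config) : cpts x = cpts y -> x = y.
Proof.
case: x => cx px; case: y => cy py /= e; subst cy.
by congr Config; exact: Prop_irrelevance.
Qed.

Lemma subpK (x y : pt) : subp (subp y x) (negp x) = y.
Proof.
by apply: eq_from_tnth => i; rewrite /subp /negp !tnth_mktuple opprK subrK.
Qed.

Lemma shiftK (x : pt) (xi : config) : Defs.shift (negp x) (Defs.shift x xi) = xi.
Proof.
apply: config_eq => /=; apply/seteqP; split.
  by move=> _ [_ [y yx <-] <-]; rewrite subpK.
by move=> y yx; exists (subp y x); [exists y | rewrite subpK].
Qed.

Lemma subp_inj (x : pt) : injective (fun y => subp y x).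
Proof.
move=> y1 y2 /= e; apply: eq_from_tnth => i.
have := congr1 (fun t => tnth t i) e; rewrite /subp !tnth_mktuple.
by move/addIr.
Qed.

Lemma npts_shift (x : pt) (xi : config) (B : set pt) :
  npts (Defs.shift x xi) B = npts xi [set y | B (subp y x)].
Proof.
rewrite /npts.
have -> : cpts (Defs.shift x xi) `&` B =
    (fun y => subp y x) @` (cpts xi `&` [set y | B (subp y x)]).
  apply/seteqP; split.
    by move=> _ [[y yx <-] By]; exists y.
  by move=> _ [y [yx By] <-]; split => //; exists y.
rewrite esum_image //; move=> y1 y2 _ _; exact: subp_inj.
Qed.


Definition box (a : pt) : set pt :=
  [set y | forall i, tnth a i <= tnth y i <= tnth a i + 1].

Lemma box_bounded a : boundedp (box a).
Proof.
exists (\sum_i (`|tnth a i| + 1)) => y hy i.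
have /andP[h1 h2] := hy i.
apply: (@le_trans _ _ (`|tnth a i| + 1)).
  rewrite ler_norml; have := ler_norm (tnth a i); have := ler_norm (- tnth a i).
  rewrite normrN => ? ?; apply/andP; split; lra.
rewrite (bigD1 i) //= lerDl; apply: sumr_ge0 => j _; apply: addr_ge0 => //.
Qed.

Lemma box_measurable a : measurable (box a).
Proof.
have -> : box a = \bigcap_(i in [set: 'I_d])
    ((fun y : pt => tnth y i) @^-1` `[tnth a i, tnth a i + 1]%classic).
  apply/seteqP; split => y /=.
    by move=> h i _ /=; rewrite in_itv /=; exact: h.
  by move=> h i; have := h i I; rewrite /= in_itv.
apply: fin_bigcap_measurable; first exact: finite_finset.
move=> i _; rewrite -[X in measurable X]setTI.
exact: (measurable_tnth i measurableT (measurable_itv _)).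
Qed.

Definition zp : pt := [tuple (0:R) | i < d].

Lemma cube_box : @cube01 R d = box zp.
Proof.
by apply/seteqP; split => y /= h i; have := h i; rewrite /zp tnth_mktuple add0r.
Qed.

Lemma mnpts (B : set pt) : measurable B -> boundedp B ->
  measurable_fun [set: configT R d] (fun xi : configT R d => npts xi B).
Proof.
move=> mB bB _ U mU; rewrite setTI.
have -> : (fun xi : configT R d => npts xi B) @^-1` (U : set (\bar R)) =
    \bigcup_(n in [set n : nat | U n%:R%:E])
                 [set xi : configT R d | npts xi B = n%:R%:E].
  apply/seteqP; split => xi /=.
    move=> Uxi; exists (cnt xi B); rewrite /= -?npts_cnt //.
  by move=> [n Un /= ->].
apply: bigcup_measurable => n _.
by apply: sub_sigma_algebra; exists B, n.
Qed.


Lemma cube_measurable : measurable (@cube01 R d).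
Proof. rewrite cube_box; exact: box_measurable. Qed.

Lemma cube_bounded : boundedp (@cube01 R d).
Proof. rewrite cube_box; exact: box_bounded. Qed.

Lemma box_shift_set1 a : [set y | box a (subp y (negp a))] = @cube01 R d.
Proof.
apply/seteqP; split => y /= h i; have := h i;
  rewrite /subp /negp !tnth_mktuple => /andP[h1 h2]; apply/andP; split; lra.
Qed.

Lemma box_shift_set2 a : [set y | @cube01 R d (subp y a)] = box a.
Proof.
apply/seteqP; split => y /= h i; have := h i;
  rewrite /subp !tnth_mktuple => /andP[h1 h2]; apply/andP; split; lra.
Qed.

Section Stat.
Variable (P : probability (configT R d) R) (Pstat : stationary P).

Lemma stat_pre a (U : set (\bar R)) : measurable U ->
  P ((fun xi : configT R d => npts xi (box a)) @^-1` U) =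
  P ((fun xi : configT R d => npts xi (@cube01 R d)) @^-1` U).
Proof.
move=> mU.
have -> : (fun xi : configT R d => npts xi (box a)) @^-1` U =
    Defs.shift (negp a) @` ((fun xi : configT R d => npts xi (@cube01 R d)) @^-1` U).
  apply/seteqP; split => xi /=.
  - move=> h; exists (Defs.shift a xi); last exact: shiftK.
    by rewrite /= npts_shift box_shift_set2.
  - by move=> [eta h <-]; rewrite npts_shift box_shift_set1.
apply: Pstat.
have := mnpts (@cube01 R d) cube_measurable cube_bounded measurableT U mU; by rewrite setTI.
Qed.

Lemma stat_int a p : (\int[P]_xi (npts xi (box a)) `^ p =
   \int[P]_xi (npts xi (@cube01 R d)) `^ p)%E.
Proof.
pose Xa : {mfun configT R d >-> \bar R} :=
  HB.pack (fun xi : configT R d => npts xi (box a))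
     (isMeasurableFun.Build _ _ _ _ _ (mnpts (box a) (box_measurable a) (box_bounded a))).
pose X0 : {mfun configT R d >-> \bar R} :=
  HB.pack (fun xi : configT R d => npts xi (@cube01 R d))
     (isMeasurableFun.Build _ _ _ _ _ (mnpts (@cube01 R d) cube_measurable cube_bounded)).
have e1 : (\int[P]_xi (npts xi (box a)) `^ p = \int[distribution P Xa]_y y `^ p)%E.
  by rewrite ge0_integral_distribution //; [exact: measurable_poweR | move=> y; exact: poweR_ge0].
have e0 : (\int[P]_xi (npts xi (@cube01 R d)) `^ p = \int[distribution P X0]_y y `^ p)%E.
  by rewrite ge0_integral_distribution //; [exact: measurable_poweR | move=> y; exact: poweR_ge0].
rewrite e1 e0; apply: eq_measure_integral => A mA _ /=.
rewrite /distribution /pushforward /=; exact: stat_pre.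
Qed.

End Stat.

End Counts.

Arguments cnt {R d}. Arguments npts_cnt {R d}. Arguments npts_ge0 {R d}.
Arguments npts_le {R d}. Arguments npts_sub_sum {R d}. Arguments npts_shift {R d}.
Arguments box {R d}. Arguments box_bounded {R d}. Arguments box_measurable {R d}.
Arguments mnpts {R d}. Arguments cube_measurable {R d}. Arguments cube_bounded {R d}.
Arguments stat_int {R d}.

Section Misc.
Context (R : realType).

Lemma le_int_nn dd (T : measurableType dd) (mu : {measure set T -> \bar R})
  (f g : T -> \bar R) :
  (forall x, 0 <= f x)%E -> (forall x, f x <= g x)%E ->
  (\int[mu]_x f x <= \int[mu]_x g x)%E.
Proof.
move=> f0 fg; have g0 x : (0 <= g x)%E by apply: le_trans (fg x).
rewrite !ge0_integralTE//; apply: ge_ereal_sup => _ [h hf <-].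
apply: ereal_sup_ubound; exists h => // x; exact: le_trans (hf x) (fg x).
Qed.

Lemma esum_cst (T : choiceType) (S : set T) (r : R) : finite_set S -> 0 <= r ->
  (\esum_(x in S) r%:E = ((#|` fset_set S|)%fset%:R * r)%:E)%E.
Proof.
move=> fS r0; rewrite esum_fset //.
rewrite fsbig_finite //= sumEFin card_fset_sum1 natr_sum mulr_suml.
by congr (_%:E); apply: eq_bigr => _ _; rewrite mul1r.
Qed.

End Misc.

Theorem lemma8p2 (R : realType) (d : nat) (P : probability (configT R d) R)
  (Pstat : stationary P)
  (m : R) (m_pos : 0 < m)
  (intensity : (\int[P]_xi npts xi (@cube01 R d))%E = m%:E)
  (gamma : R) (gamma_pos : 0 < gamma) (L : nat) (z : pt R d) :
  (palmE P m (fun xi => npts xi (Lambda L z) `^ gamma)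
   <= (m^-1 * ((2 * L%:R + 2) `^ (d%:R * gamma)))%:E * rho P (1 + gamma))%E.
Proof.
have g0 := gamma_pos.
set p := 1 + gamma.
have p0 : 0 < p by rewrite /p; lra.
pose n := (2 * L).+1.
pose K := {ffun 'I_d -> 'I_n}.
pose ak (k : K) : pt R d := [tuple tnth z i - L%:R + (k i : nat)%:R | i < d].
pose Lam : set (pt R d) :=
  [set y | forall i, tnth z i - L%:R <= tnth y i <= tnth z i + L%:R + 1].
have cover : Lam `<=` \bigcup_k box (ak k).
  move=> y hy.
  pose t i := tnth y i - tnth z i + L%:R.
  have t0 i : 0 <= t i by have /andP[h1 h2] := hy i; rewrite /t; lra.
  have t1 i : t i <= 2 * L%:R + 1 by have /andP[h1 h2] := hy i; rewrite /t; lra.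
  exists [ffun i => inord (minn (Num.truncn (t i)) (2*L))] => //.
  move=> i; rewrite tnth_mktuple ffunE inordK; last by rewrite ltnS geq_minr.
  have /andP[h1 h2] := Num.Theory.truncn_itv (t0 i).
  have u0 := t0 i; have u1 := t1 i.
  case: (leqP (Num.truncn (t i)) (2*L)) => hm.
    rewrite -natr1 in h2; rewrite /t in h1 h2 u0 u1.
    apply/andP; split; lra.
  move: hm; rewrite Num.Theory.truncn_gt_nat -natr1 natrM => hm.
  rewrite /t in hm u0 u1.
  apply/andP; split; lra.
have incl x : @cube01 R d x -> [set y | Lambda L z (subp y x)] `<=` Lam.
  move=> hx y hy i; have := hy i; have := hx i.
  rewrite /subp tnth_mktuple => /andP[h1 h2] /andP[h3 h4]; apply/andP; split; lra.
have Kc : #|K| = (n ^ d)%N by rewrite card_ffun !card_ord.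
have K0 : (0 < #|K|)%N by rewrite Kc expn_gt0.
pose N : R := #|K|%:R.
have N0 : 0 < N by rewrite /N ltr0n.
pose c1 := N `^ gamma / p.
pose c2 := N `^ gamma / N * (gamma / p).
have c10 : 0 <= c1 by rewrite /c1 divr_ge0 ?powR_ge0 // ltW.
have c20 : 0 <= c2.
  by rewrite /c2 mulr_ge0 // ?divr_ge0 ?powR_ge0 // ltW.
pose G (xi : configT R d) := (c1%:E * npts xi (@cube01 R d) `^ p
   + c2%:E * \sum_(k : K) npts xi (box (ak k)) `^ p)%E.
have pw xi : (\esum_(x in cpts xi `&` @cube01 R d)
     npts (Defs.shift x xi) (Lambda L z) `^ gamma <= G xi)%E.
  pose r := (\sum_(k : K) (cnt xi (box (ak k)))%:R) `^ gamma.
  have esb : (\sum_(k:K) npts xi (box (ak k)) =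
      (\sum_(k:K) (cnt xi (box (ak k)))%:R)%:E)%E.
    rewrite -sumEFin; apply: eq_bigr => k _; exact: npts_cnt (box_bounded _).
  apply: (@le_trans _ _ (\esum_(x in cpts xi `&` @cube01 R d) r%:E)%E).
    apply: le_esum => x [_ hx]; rewrite npts_shift /r -poweR_EFin -esb.
    apply: gt0_ler_poweR.
    - exact: ltW.
    - by rewrite in_itv /= npts_ge0 leey.
    - by rewrite in_itv /= leey andbT; apply: sume_ge0 => k _; exact: npts_ge0.
    apply: le_trans (npts_le _ _ _ (incl x hx)) _.
    exact: npts_sub_sum cover.
  rewrite esum_cst; [|exact: (@cpts_lf _ _ xi _ cube_bounded) | exact: powR_ge0].
  rewrite /G (npts_cnt _ _ cube_bounded).
  under eq_bigr do rewrite (npts_cnt _ _ (box_bounded _)) poweR_EFin.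
  rewrite poweR_EFin sumEFin -!EFinM -EFinD lee_fin.
  apply: key_ineq => //; exact: ler0n.
have rho0 : (0 <= rho P p)%E.
  by apply: integral_ge0 => xi _; exact: poweR_ge0.
have pow0 : 0 < m^-1 * (2 * L%:R + 2) `^ (d%:R * gamma).
  by rewrite mulr_gt0 ?invr_gt0 // powR_gt0 //; lra.
rewrite -/p.
case E: (rho P p) rho0 => [r| |] // rho0.
  2: by rewrite gt0_muley ?leey // lee_fin.
have mb k : measurable_fun setT (fun xi : configT R d => npts xi (box (ak k)) `^ p)%E.
  exact: measurableT_comp (measurable_poweR p) (mnpts _ (box_measurable _) (box_bounded _)).
have mc : measurable_fun setT (fun xi : configT R d => npts xi (@cube01 R d) `^ p)%E.
  exact: measurableT_comp (measurable_poweR p) (mnpts _ cube_measurable cube_bounded).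
have intG : (\int[P]_xi G xi = (N `^ gamma * r)%:E)%E.
  have s0 : forall xi, (0 <= \sum_(k : K) npts xi (box (ak k)) `^ p)%E.
    by move=> xi; apply: sume_ge0 => k _; exact: poweR_ge0.
  have ms : measurable_fun setT (fun xi : configT R d => \sum_(k : K) npts xi (box (ak k)) `^ p)%E.
    exact: emeasurable_sum.
  have h1 : forall xi, setT xi -> (0 <= c1%:E * npts xi (@cube01 R d) `^ p)%E.
    by move=> xi _; apply: mule_ge0; [rewrite lee_fin | exact: poweR_ge0].
  have h2 : forall xi, setT xi -> (0 <= c2%:E * \sum_(k : K) npts xi (box (ak k)) `^ p)%E.
    by move=> xi _; apply: mule_ge0; [rewrite lee_fin | exact: s0].
  have h3 : measurable_fun setT (fun xi : configT R d => c1%:E * npts xi (@cube01 R d) `^ p)%E.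
    exact: emeasurable_funM.
  have h4 : measurable_fun setT (fun xi : configT R d => c2%:E * \sum_(k : K) npts xi (box (ak k)) `^ p)%E.
    exact: emeasurable_funM.
  rewrite /G ge0_integralD //.
  rewrite !ge0_integralZl_EFin //; last first.
    by move=> xi _; exact: poweR_ge0.
  rewrite ge0_integral_sum //; last by move=> k xi _; exact: poweR_ge0.
  rewrite -[X in (c1%:E * X)%E]/(rho P p) E.
  under eq_bigr do rewrite (stat_int P Pstat) -/(rho P p) E.
  rewrite sumEFin sumr_const -mulr_natr -!EFinM -EFinD; congr (_%:E).
  rewrite /c1 /c2 /N /p; field.
  by rewrite /N in N0; rewrite (gt_eqF N0) (gt_eqF p0).
have r0 : 0 <= r by rewrite lee_fin in rho0.
have L0 : (0 : R) <= L%:R := ler0n _ _.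
have Npow : N `^ gamma <= (2 * L%:R + 2) `^ (d%:R * gamma).
  rewrite /N Kc natrX -powR_mulrn ?ler0n // -powRrM.
  apply: ge0_ler_powR.
  - by rewrite mulr_ge0 ?ler0n // ltW.
  - by rewrite nnegrE ler0n.
  - by rewrite nnegrE; lra.
  - by rewrite /n -natr1 natrM; lra.
rewrite /palmE.
have f0 : forall xi : configT R d, (0 <= \esum_(x in cpts xi `&` @cube01 R d)
     npts (Defs.shift x xi) (Lambda L z) `^ gamma)%E.
  by move=> xi; apply: esum_ge0 => y _; exact: poweR_ge0.
apply: le_trans.
  apply: lee_wpmul2l; first by rewrite lee_fin invr_ge0 ltW.
  exact: (@le_int_nn R _ _ P _ _ f0 pw).
rewrite intG -!EFinM lee_fin -mulrA ler_wpM2l ?invr_ge0 ?(ltW m_pos) //.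
by rewrite ler_wpM2r.
Qed.
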